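(* Consider a CoMP BC under the finite-field model over $\mathbb F_q$ with connectivity matrix $\mathbf M\in\{0,*\}^{K\times B}$. Then for every prime power $q$, $C_\Sigma^{\mathrm{NS}}(q)\ge \operatorname{tri}(\mathbf M)\log_2 q$, and $d_\Sigma^{\mathrm{NS}}\ge\operatorname{tri}(\mathbf M)$.
   Context: CoMP BC, finite-field model: $B$ transmit antennas, $K$ receivers, connectivity $\mathbf M\in\{0,*\}^{K\times B}$. At use $\tau$ the transmitter sends $X^{(\tau)}\in\mathbb F_q^B$ and Rx-$k$ observes $(Y_k^{(\tau)},(G_{kj}^{(\tau)})_j)$, $Y_k^{(\tau)}=\sum_jG_{kj}^{(\tau)}X_j^{(\tau)}$; coefficients mutually independent over $k,j,\tau$ and of the messages, uniform on $\mathbb F_q^\times$ if $M_{kj}=*$, else $0$. Messages $W_k$ independent, uniform on finite $\mathcal M_k$. A $\kappa$-partite NS box is a conditional pmf of outputs given inputs (finite output alphabets) whose output marginals for any subset of parties depend only on those parties' inputs. An NS-assisted scheme is a $(K+1)$-partite NS box where the transmitter inputs $(W_1,\dots,W_K)$ and obtains the channel input sequence, and Rx-$k$ inputs its channel output sequence and obtains $\hat W_k$; joint law = uniform message pmf $\times$ box $\times$ channel. Rates are achievable if some sequence of schemes has vanishing $\max_k\Pr(\hat W_k\ne W_k)$ and $\lim\frac1n\log_2|\mathcal M_k|\ge R_k$; $C_\Sigma^{\mathrm{NS}}(q)$ is the maximal sum rate over the closure. A DoF tuple is achievable if for each prime power $q$ some NS-achievable rate tuple has $\lim_q R_k(q)/\log_2q\ge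 d_k$; $d_\Sigma^{\mathrm{NS}}$ is the maximal sum over the closure. $\mathbf M$ contains a $D$-triangular matrix if after permuting rows and columns it has a $D\times D$ submatrix that is lower triangular with all diagonal entries $*$; $\operatorname{tri}(\mathbf M)$ is the largest such $D$. *)

(* Defs.v *)
From HB Require Import structures.
From mathcomp Require Import all_boot all_order all_algebra.
From mathcomp Require Import all_classical all_reals all_analysis.

Set Implicit Arguments.
Unset Strict Implicit.
Unset Printing Implicit Defensive.

Import Order.TTheory GRing.Theory Num.Theory.
Local Open Scope ring_scope.

(* Connectivity matrix  M : 'M[bool]_(K,B),  M k j = true  <->  M_kj = * *)

Definition has_tri (K B : nat) (M : 'M[bool]_(K, B)) (D : nat) : bool :=
  [exists r : {ffun 'I_D -> 'I_K}, exists c : {ffun 'I_D -> 'I_B},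
    [&& injectiveb r, injectiveb c,
        [forall i : 'I_D, M (r i) (c i)] &
        [forall i : 'I_D, forall j : 'I_D, (i < j)%N ==> ~~ M (r i) (c j)]]].

(* tri(M): the largest such D (D <= K by injectivity of the row choice;
   D = 0 always qualifies). *)
Definition tri (K B : nat) (M : 'M[bool]_(K, B)) : nat :=
  \max_(D < K.+1 | has_tri M D) (D : nat).

Section Model.
Variable R : realType.

Definition log2 (x : R) : R := ln x / ln 2.

(* closure in R^K (sup-norm, equivalently Euclidean) *)
Definition closureK (K : nat) (A : ('I_K -> R) -> Prop) (r : 'I_K -> R) : Prop :=
  forall eps : R, 0 < eps ->
    exists r', A r' /\ forall k, `|r k - r' k| < eps.

Variable F : finFieldType.
Variables K B : nat.
Variable M : 'M[bool]_(K, B).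

(* message tuples: W_k ranges over M_k = 'I_(m k).+1, |M_k| = (m k).+1 *)
Definition msgs (m : 'I_K -> nat) := {dffun forall k : 'I_K, 'I_(m k).+1}.
Definition chin (n : nat) := {ffun 'I_n -> 'rV[F]_B}.
(* channel output sequence of one receiver: (Y_k^(tau), (G_kj^(tau))_j) *)
Definition rxobs (n : nat) := {ffun 'I_n -> (F * 'rV[F]_B)%type}.
Definition coefs (n : nat) := {ffun 'I_n -> 'M[F]_(K, B)}.

Definition pcoef (b : bool) (a : F) : R :=
  if b then (if a != 0 then (#|F| - 1)%:R^-1 else 0) else (a == 0)%:R.

Definition PG (n : nat) (g : coefs n) : R :=
  \prod_(t < n) \prod_(k < K) \prod_(j < B) pcoef (M k j) (g t k j).

Definition obs (n : nat) (x : chin n) (g : coefs n) : {ffun 'I_K -> rxobs n} :=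
  [ffun k => [ffun t => (\sum_(j < B) g t k j * x t 0 j, row k (g t))]].

(* An NS-assisted scheme of block length n with message sets M_k = 'I_(m k).+1:
   a (K+1)-partite box  P w o x wh = P(x, wh_1..wh_K | w, o_1..o_K),
   transmitter: input w (all messages), output x (channel input sequence);
   Rx-k: input o k (its channel output sequence), output wh k. *)
Definition box (n : nat) (m : 'I_K -> nat) :=
  msgs m -> {ffun 'I_K -> rxobs n} -> chin n -> msgs m -> R.

(* parties: None = transmitter, Some k = Rx-k *)
Definition NS_box (n : nat) (m : 'I_K -> nat) (P : box n m) : Prop :=
  (forall (w : msgs m) (o : {ffun 'I_K -> rxobs n}) (x : chin n) (wh : msgs m), 0 <= P w o x wh) /\
  (forall (w : msgs m) (o : {ffun 'I_K -> rxobs n}), \sum_(x : chin n) \sum_(wh : msgs m) P w o x wh = 1) /\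
  (* no-signalling: for every subset S of parties, the marginal of the
     outputs of S depends only on the inputs of S *)
  (forall (S : {set option 'I_K}) (w : msgs m) (o : {ffun 'I_K -> rxobs n})
     (w' : msgs m) (o' : {ffun 'I_K -> rxobs n}),
     (None \in S -> w = w') ->
     (forall k, Some k \in S -> o k = o' k) ->
     forall (x : chin n) (wh : msgs m),
       \sum_(x' : chin n | (None \in S) ==> (x' == x))
         \sum_(wh' : msgs m | [forall k, (Some k \in S) ==> (wh' k == wh k)])
            P w o x' wh'
       = \sum_(x' : chin n | (None \in S) ==> (x' == x))
         \sum_(wh' : msgs m | [forall k, (Some k \in S) ==> (wh' k == wh k)])
            P w' o' x' wh').

(* Pr(What_k <> W_k) under the joint law
   uniform message pmf x box x channel (coefficients marginalized) *)
Definition err (n : nat) (m : 'I_K -> nat) (P : box n m) (k : 'I_K) : R :=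
  \sum_(w : msgs m) \sum_(g : coefs n) \sum_(x : chin n) \sum_(wh : msgs m)
     (#|{: msgs m}|%:R)^-1 * PG g * P w (obs x g) x wh * (wh k != w k)%:R.

(* NS-achievable rate tuples (bits per channel use): a sequence of schemes
   (indexed by N, block length nl N >= 1) with vanishing max_k error and
   liminf_N (1/nl N) log2 |M_k| >= r_k. *)
Definition NS_achievable (r : 'I_K -> R) : Prop :=
  exists (nl : nat -> nat) (m : nat -> 'I_K -> nat)
         (P : forall N, box (nl N) (m N)),
    (forall N, (0 < nl N)%N) /\
    (forall N, NS_box (P N)) /\
    (forall eps : R, 0 < eps -> exists N0, forall N, (N0 <= N)%N ->
        forall k, err (P N) k <= eps) /\
    (forall eps : R, 0 < eps -> exists N0, forall N, (N0 <= N)%N ->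
        forall k, r k - eps <= log2 (m N k).+1%:R / (nl N)%:R).

Definition CSigma_NS : \bar R :=
  ereal_sup [set (\sum_(k < K) r k)%:E | r in closureK NS_achievable].

End Model.

Arguments CSigma_NS : clear implicits.
Arguments NS_achievable : clear implicits.

(* DoF: for each finite field F (of size q) an NS-achievable rate tuple
   Rt F with liminf_{q -> oo} Rt F k / log2 q >= d k. *)
Definition DoF_achievable (R : realType) (K B : nat) (M : 'M[bool]_(K, B))
    (d : 'I_K -> R) : Prop :=
  exists Rt : forall F : finFieldType, 'I_K -> R,
    (forall F : finFieldType, NS_achievable R F K B M (Rt F)) /\
    (forall k (eps : R), 0 < eps -> exists Q : nat,
       forall F : finFieldType, (Q <= #|F|)%N ->
         d k - eps <= Rt F k / log2 (#|F|%:R : R)).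

Definition dSigma_NS (R : realType) (K B : nat) (M : 'M[bool]_(K, B)) : \bar R :=
  ereal_sup [set (\sum_(k < K) d k)%:E | d in closureK (DoF_achievable M)].

(* Main.v *)
Require Import Defs.
From HB Require Import structures.
From mathcomp Require Import all_boot all_order all_algebra.
From mathcomp Require Import all_classical all_reals all_analysis.
From mathcomp Require Import lra.
Import Order.TTheory GRing.Theory Num.Theory.
Local Open Scope ring_scope.
Set Implicit Arguments.
Unset Strict Implicit.
Unset Printing Implicit Defensive.

Lemma tri_has (K B : nat) (M : 'M[bool]_(K, B)) : has_tri M (tri M).
Proof.
have h0 : has_tri M (@ord0 K).
  have ff (T : Type) : 'I_0 -> T by case=> i; rewrite ltn0.
  apply/existsP; exists [ffun i => ff _ i]; apply/existsP; exists [ffun i => ff _ i].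
  apply/and4P; split; try (by apply/injectiveP => -[]);
    by apply/forallP => -[].
rewrite /tri (bigop.bigmax_eq_arg ord0) //.
by case: arg_maxnP.
Qed.

Lemma sum_inj (R : nmodType) (I J : finType) (h : I -> J) (f : J -> R) :
  injective h -> (forall j, (forall i, h i != j) -> f j = 0) ->
  \sum_j f j = \sum_i f (h i).
Proof.
move=> hinj hf.
rewrite (bigID (mem (h @: [set: I]))) /= [X in _ + X]big1 ?addr0.
  rewrite big_imset /=; last by move=> x y _ _; apply: hinj.
  by apply: eq_bigl => i; rewrite finset.in_setT.
move=> j /imsetP Hj; apply: hf => i; apply/eqP => Hi; apply: Hj.
by exists i; rewrite ?finset.in_setT.
Qed.

Lemma sum_ind (R : nzSemiRingType) (I : finType) (P : pred I) (a : I) (f : I -> R) :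
  \sum_(i | P i) (i == a)%:R * f i = (P a)%:R * f a.
Proof.
rewrite big_mkcond (bigD1 a) //= big1 ?addr0.
  by case: (P a); rewrite ?eqxx ?mul1r ?mul0r.
by move=> i /negbTE ->; case: (P i); rewrite ?mul0r.
Qed.

Section Scheme.
Variables (R : realType) (F : finFieldType) (K B D : nat) (M : 'M[bool]_(K,B)).
Variables (r : {ffun 'I_D -> 'I_K}) (c : {ffun 'I_D -> 'I_B}).
Hypotheses (rinj : injective r) (cinj : injective c)
  (diag : forall i, M (r i) (c i))
  (upper : forall i j : 'I_D, (i < j)%N -> ~~ M (r i) (c j)).

Definition sel (k : 'I_K) : bool := [exists i, r i == k].
Definition mm (k : 'I_K) : nat := if sel k then #|F|.-1 else 0%N.
Definition U := {ffun 'I_D -> F}.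
Definition enc (n : nat) : F := nth 0 (enum F) n.
Definition Xof (u : U) : chin F B 1 :=
  [ffun t => \row_j (if [pick i | c i == j] is Some i then u i else 0)].
Definition phi (o : rxobs F B 1) (i : 'I_D) (u : U) : F :=
  ((o ord0).1 - \sum_(i' < D | (i' < i)%N) (o ord0).2 0 (c i') * u i')
    / (o ord0).2 0 (c i).
Definition Z (w : msgs mm) (o : {ffun 'I_K -> rxobs F B 1}) (u : U) : U :=
  [ffun i => enc (w (r i)) - u i + phi (o (r i)) i u].
Definition Gk (k : 'I_K) (z : U) : 'I_(mm k).+1 :=
  if [pick i | r i == k] is Some i then inord (index (z i) (enum F)) else ord0.
Definition Dec w o u : msgs mm := @finfun _ (fun k => 'I_(mm k).+1) (fun k => Gk k (Z w o u)).
Definition Pbox : box R F B 1 mm := fun w o x wh =>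
  \sum_(u : U) (#|{: U}|%:R)^-1 * ((x == Xof u) && (wh == Dec w o u))%:R.

Lemma Z_inj w o : injective (Z w o).
Proof.
move=> u u' H; apply/ffunP.
suff: forall n (i : 'I_D), (i < n)%N -> u i = u' i by move=> /(_ D) h i; apply: h.
elim=> [|n IH] i //.
rewrite ltnS leq_eqVlt => /orP[/eqP ein|/IH //].
have := congr1 (fun z : U => z i) H; rewrite /= !ffunE.
have -> : phi (o (r i)) i u = phi (o (r i)) i u'.
  rewrite /phi; congr (_ / _); congr (_ - _); apply: eq_bigr => i' hi'.
  by rewrite IH // -ein.
by move/addIr/addrI/oppr_inj.
Qed.

Lemma marg (Px : pred (chin F B 1)) (Pw : pred (msgs mm)) w o :
  \sum_(x | Px x) \sum_(wh | Pw wh) Pbox w o x wh =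
  \sum_u (Px (Xof u))%:R * ((Pw (Dec w o u))%:R * (#|{: U}|%:R)^-1).
Proof.
rewrite /Pbox.
under eq_bigr do rewrite exchange_big /=.
rewrite exchange_big /=; apply: eq_bigr => u _.
under eq_bigr do under eq_bigr do rewrite -mulnb natrM mulrCA.
under eq_bigr do rewrite -mulr_sumr.
rewrite sum_ind; congr (_ * _).
under eq_bigr do rewrite mulrC.
by rewrite sum_ind.
Qed.

Lemma cardU_gt0 : (0 < #|{: U}|)%N.
Proof. by apply/card_gt0P; exists [ffun=> 0]. Qed.

Lemma Gk_o w (o o' : {ffun 'I_K -> rxobs F B 1}) u k : o k = o' k -> Gk k (Z w o u) = Gk k (Z w o' u).
Proof.
move=> ok; rewrite /Gk; case: pickP => // i /eqP rik.
rewrite !ffunE.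
by have -> : o (r i) = o' (r i) by rewrite rik.
Qed.

Lemma Pbox_NS : NS_box Pbox.
Proof.
split; [|split].
- move=> w o x wh; apply: sumr_ge0 => u _.
  by apply: mulr_ge0; rewrite ?invr_ge0 ler0n.
- move=> w o.
  transitivity (\sum_(u : U) 1 * (1 * (#|{: U}|%:R : R)^-1)); first exact: (marg predT predT w o).
  under eq_bigr do rewrite !mul1r.
  rewrite sumr_const -(mulr_natl (#|{: U}|%:R^-1 : R)) -[#|xpredT|]/#|{: U}| mulfV // pnatr_eq0 -lt0n; exact: cardU_gt0.
- move=> S w o w' o' ew eo x wh.
  rewrite !marg.
  case: (boolP (None \in S)) => NS.
  + rewrite -(ew NS); apply: eq_bigr => u _; congr (_ * ((_)%:R * _)).
    apply: congr1; apply/eq_forallb => k; case: (boolP (Some k \in S)) => //= Sk.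
    by rewrite !ffunE (Gk_o _ _ (eo _ Sk)).
  + set h := fun z => [forall k, (Some k \in S) ==> (Gk k z == wh k)].
    have E : forall w0 o0, \sum_u (false ==> (Xof u == x))%:R *
       ([forall k, (Some k \in S) ==> (Dec w0 o0 u k == wh k)]%:R * (#|{: U}|%:R : R)^-1)
       = \sum_z (h z)%:R * (#|{: U}|%:R : R)^-1.
      move=> w0 o0; rewrite [RHS](reindex_inj (@Z_inj w0 o0)) /=.
      apply: eq_bigr => u _; rewrite mul1r; congr ((nat_of_bool _)%:R * _).
      by apply: eq_forallb => k; rewrite ffunE.
    by rewrite !E.
Qed.

Lemma PG_neq0 (g : coefs F K B 1) k j : PG R M g != 0 -> pcoef R (M k j) (g ord0 k j) != 0.
Proof.
apply: contraNneq => H.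
by rewrite /PG big_ord1 (bigD1 k) //= (bigD1 j) //= H !mul0r.
Qed.

Lemma pcoef_false (a : F) : pcoef R false a != 0 -> a = 0.
Proof. by rewrite /pcoef pnatr_eq0 eqb0 negbK => /eqP. Qed.

Lemma pcoef_true (a : F) : pcoef R true a != 0 -> a != 0.
Proof. by rewrite /pcoef; case: (a != 0) => //; rewrite eqxx. Qed.

Lemma Dec_correct w (g : coefs F K B 1) u k :
  PG R M g != 0 -> Dec w (obs (Xof u) g) u k = w k.
Proof.
move=> Hg.
rewrite ffunE /Gk; case: pickP => [i /eqP rik | none].
- subst k; rewrite ffunE.
  have -> : phi (obs (Xof u) g (r i)) i u = u i.
    rewrite /phi /obs !ffunE /=.
    under [X in X - _]eq_bigr do rewrite mxE.
    under [X in _ - X]eq_bigr do rewrite mxE.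
    rewrite mxE.
    rewrite (sum_inj (h := c)) //; last first.
      move=> j Hj; case: pickP => [i' /eqP ci'|]; last by rewrite mulr0.
      by have := Hj i'; rewrite ci' eqxx.
    rewrite (eq_bigr (fun i' => g ord0 (r i) (c i') * u i')); last first.
      move=> i' _; congr (_ * _).
      case: pickP => [i0 /eqP /cinj -> //|/(_ i')]; by rewrite eqxx.
    rewrite [X in X - _](bigID (fun i0 : 'I_D => (i0 < i)%N)) /= addrAC subrr add0r.
    rewrite (bigD1 i) ?ltnn //= big1 ?addr0.
      rewrite mulrAC mulfV ?mul1r //; apply: pcoef_true; rewrite -(diag i); exact: PG_neq0.
    move=> i' /andP[]; rewrite -leqNgt => le ne.
    have lt : (i < i')%N.
      by rewrite ltn_neqAle le andbT; apply: contra ne => /eqP/val_inj ->.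
    have := upper lt => /negbTE Mf.
    have := PG_neq0 (r i) (c i') Hg; rewrite Mf => /pcoef_false ->.
    by rewrite mul0r.
  rewrite subrK /enc index_uniq ?enum_uniq ?inord_val //.
  have Hm : (mm (r i)).+1 = #|F|.
    have -> : mm (r i) = #|F|.-1 by rewrite /mm; case: ifP => // /existsP[]; exists i.
    by rewrite prednK //; apply/card_gt0P; exists 0.
  by rewrite -cardE -Hm; exact: ltn_ord.
- apply: val_inj => /=.
  have sk : sel k = false by apply/existsP => -[i]; rewrite none.
  have Hm : mm k = 0%N by rewrite /mm sk.
  have := ltn_ord (w k); move: (nat_of_ord (w k)) => n.
  by rewrite Hm ltnS leqn0 => /eqP ->.
Qed.

Lemma err0 k : err M Pbox k = 0.
Proof.
rewrite /err; apply: big1 => w _; apply: big1 => g _; apply: big1 => x _; apply: big1 => wh _.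
case: (eqVneq (PG R M g) 0) => [->|Hg]; first by rewrite mulr0 !mul0r.
rewrite -mulrA /Pbox mulr_suml big1 ?mulr0 // => u _.
case: (eqVneq x (Xof u)) => [ex|nx]; last by rewrite /= mulr0 mul0r.
case: (eqVneq wh (Dec w (obs x g) u)) => [ewh|nwh]; last by rewrite andbF mulr0 mul0r.
by rewrite ewh ex Dec_correct // eqxx mulr0.
Qed.

Lemma cardF_gt1 : (1 < #|F|)%N.
Proof.
rewrite (cardD1 0) (cardD1 1) !inE oner_neq0 //.
Qed.

Definition rate (k : 'I_K) : R := log2 ((mm k).+1%:R).

Lemma rate_sel k : rate k = (sel k)%:R * log2 #|F|%:R.
Proof.
rewrite /rate /mm; case: ifP => _.
  by rewrite prednK ?mul1r // ltnW // cardF_gt1.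
by rewrite mul0r /log2 ln1 mul0r.
Qed.

Lemma sel_sum : \sum_k ((sel k)%:R : R) = D%:R.
Proof.
rewrite (sum_inj (h := r)) //; last first.
  move=> j Hj; have -> : sel j = false by apply/existsP => -[i]; rewrite (negbTE (Hj i)).
  by [].
rewrite (eq_bigr (fun _ => 1)); first by rewrite sumr_const card_ord.
by move=> i _; have -> : sel (r i) by apply/existsP; exists i.
Qed.

Lemma rate_sum : \sum_k rate k = D%:R * log2 #|F|%:R.
Proof. by under eq_bigr do rewrite rate_sel; rewrite -mulr_suml sel_sum. Qed.

Lemma rate_ach : NS_achievable R F K B M rate.
Proof.
exists (fun _ => 1%N), (fun _ => mm), (fun _ => Pbox).
split; first by [].
split; first by move=> _; exact: Pbox_NS.
split.
  by move=> eps e0; exists 0%N => N _ k; rewrite err0 ltW.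
move=> eps e0; exists 0%N => N _ k; rewrite divr1 /rate.
by rewrite lerBlDr lerDl ltW.
Qed.

End Scheme.

Theorem theorem9 (R : realType) (K B : nat) (M : 'M[bool]_(K, B)) :
  (forall F : finFieldType,
     ((tri M)%:R * log2 (#|F|%:R : R))%:E <= CSigma_NS R F K B M)%E /\
  (((tri M)%:R : R)%:E <= dSigma_NS R M)%E.
Proof.
have := tri_has M.
case/existsP => r /existsP[c /and4P[/injectiveP ri /injectiveP ci /forallP dg /forallP up]].
have up' : forall i j : 'I_(tri M), (i < j)%N -> ~~ M (r i) (c j).
  by move=> i j lt; exact: (implyP (forallP (up i) j) lt).
have ach : forall F : finFieldType, NS_achievable R F K B M (rate R F r).
  by move=> F; apply: rate_ach => //.
split.
  move=> F; apply: ereal_sup_ubound; exists (rate R F r).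
    by move=> eps e0; exists (rate R F r); split => // k; rewrite subrr normr0.
  by rewrite rate_sum.
apply: ereal_sup_ubound; exists (fun k => (sel r k)%:R).
  move=> eps e0; exists (fun k => (sel r k)%:R); split; last by move=> k; rewrite subrr normr0.
  exists (fun F => rate R F r); split => // k eps' e0'; exists 0%N => F _.
  rewrite rate_sel.
  have lq : log2 (#|F|%:R : R) != 0.
    rewrite /log2 mulf_neq0 // ?invr_eq0 gt_eqF // ln_gt0 // ?ltr1n //.
    exact: cardF_gt1.
  rewrite mulfK //.
  by rewrite lerBlDr lerDl ltW.
by rewrite sel_sum.
Qed.
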